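(* For every real $\theta>1$, the set $\mathcal A_\theta$ has density $0$, i.e. $\lim_{N\to\infty}\frac{|\mathcal A_\theta\cap[1,N]|}{N}=0$.
   Context: $\lfloor x\rfloor$ is the floor of $x$; $\log$ is the natural logarithm. For real $\theta>1$ and positive integer $n$, $M'_\theta(n)=\left\lfloor 1/(\theta^{1/n}-1)\right\rfloor$, and $\mathcal A_\theta=\{n\in\mathbb N: M'_\theta(n)\neq \lfloor n/\log\theta-1/2\rfloor\}$, where $\mathbb N$ is the set of positive integers. *)

(* Defs.v *)
From Stdlib Require Import Reals Lra Lia ZArith.
Open Scope R_scope.

(* floor of a real number: Int_part x = up x - 1 is the floor. *)
Definition floorR (x : R) : Z := Int_part x.

Definition Mprime (theta : R) (n : nat) : Z :=
  floorR (1 / (Rpower theta (1 / INR n) - 1)).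

Definition Mapprox (theta : R) (n : nat) : Z :=
  floorR (INR n / ln theta - 1 / 2).

Definition in_A (theta : R) (n : nat) : Prop :=
  (1 <= n)%nat /\ Mprime theta n <> Mapprox theta n.

Fixpoint countA (theta : R) (N : nat) : nat :=
  match N with
  | O => O
  | S m => (countA theta m +
            if Z.eq_dec (Mprime theta (S m)) (Mapprox theta (S m)) then 0 else 1)%nat
  end.

(* Main.v *)
Require Import Defs.
From Stdlib Require Import Reals Lra Lia ZArith Classical Arith.
From Coquelicot Require Import Coquelicot.
Open Scope R_scope.

Lemma phi_nonneg : forall y, 0 <= y -> (2 - y) * exp y <= 2 + y.
Proof.
  intros y Hy.
  set (phi := fun t => (2 + t) - (2 - t) * exp t).
  assert (Hd : forall t, is_derive phi t (1 - (1 - t) * exp t)).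
  { intros t. unfold phi. auto_derive. auto. ring. }
  destruct (MVT_gen phi 0 y (fun t => 1 - (1 - t) * exp t)) as [c [Hc Heq]].
  - intros; apply Hd.
  - intros t _. apply continuity_pt_filterlim. apply (ex_derive_continuous (V:=R_NormedModule) phi).
    eexists; apply Hd.
  - assert (Hc' : 0 <= 1 - (1 - c) * exp c).
    { pose proof (exp_ineq1_le (- c)) as H1.
      pose proof (exp_pos c) as H2.
      assert (H3 : exp (- c) * exp c = 1).
      { rewrite <- exp_plus. replace (- c + c) with 0 by ring. apply exp_0. }
      nra. }
    unfold phi in Heq. rewrite exp_0 in Heq. nra.
Qed.

Lemma exp_bounds : forall x, 0 < x ->
  1 / x - 1 / 2 <= 1 / (exp x - 1) <= 1 / x - 1 / 2 + x / 4.
Proof.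
  intros x Hx.
  pose proof (exp_ge_taylor x 2 (Rlt_le _ _ Hx)) as Ht.
  simpl in Ht.
  assert (HE : x + x * x / 2 <= exp x - 1).
  { replace (x * x / 2) with (x * (x * 1) / (1 + 1)) by field. lra. }
  assert (HEp : 0 < exp x - 1) by nra.
  pose proof (phi_nonneg x (Rlt_le _ _ Hx)) as Hp.
  split.
  - apply (Rmult_le_reg_r (exp x - 1)); auto.
    replace (1 / (exp x - 1) * (exp x - 1)) with 1 by (field; lra).
    apply (Rmult_le_reg_r (2 * x)); [lra|].
    replace ((1 / x - 1 / 2) * (exp x - 1) * (2 * x)) with ((2 - x) * (exp x - 1)) by (field; lra).
    lra.
  - apply (Rmult_le_reg_r (exp x - 1)); auto.
    replace (1 / (exp x - 1) * (exp x - 1)) with 1 by (field; lra).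
    assert (Hpos : 0 <= 1 / x - 1 / 2 + x / 4).
    { replace (1 / x - 1 / 2 + x / 4) with (((x - 1) * (x - 1) + 3) / (4 * x)) by (field; lra).
      apply Rle_mult_inv_pos; nra. }
    apply Rle_trans with ((1 / x - 1 / 2 + x / 4) * (x + x * x / 2)).
    + replace ((1 / x - 1 / 2 + x / 4) * (x + x * x / 2)) with (1 + x * x * x / 8) by (field; lra).
      nra.
    + apply Rmult_le_compat_l; auto.
Qed.
Open Scope nat_scope.

Definition indb (b : bool) : nat := if b then 1 else 0.
Fixpoint sumn (F : nat -> nat) (N : nat) : nat :=
  match N with O => O | S m => sumn F m + F m end.

Lemma sumn_le : forall F G N, (forall i, i < N -> F i <= G i) -> sumn F N <= sumn G N.
Proof. intros F G N; induction N; simpl; intros H; [lia|].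
  specialize (IHN (fun i Hi => H i ltac:(lia))). specialize (H N ltac:(lia)). lia. Qed.

Lemma sumn_ext : forall F G N, (forall i, i < N -> F i = G i) -> sumn F N = sumn G N.
Proof. intros F G N; induction N; simpl; intros H; [lia|].
  rewrite IHN by (intros; apply H; lia). rewrite H by lia. lia. Qed.

Lemma sumn_add : forall F G N, sumn (fun i => F i + G i) N = sumn F N + sumn G N.
Proof. intros F G N; induction N; simpl; lia. Qed.

Lemma sumn_split : forall F k N, sumn F (k + N) = sumn F k + sumn (fun m => F (k + m)) N.
Proof. intros F k N; induction N; simpl.
  - rewrite Nat.add_0_r; lia.
  - rewrite Nat.add_succ_r; simpl; lia. Qed.

Lemma sumn_front : forall F M, sumn F (S M) = F 0 + sumn (fun j => F (S j)) M.
Proof. intros F M; induction M; simpl in *; lia. Qed.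

Lemma sumn_le1 : forall F N, (forall i, F i <= 1) -> sumn F N <= N.
Proof. intros F N H; induction N; simpl; [lia|]. specialize (H N); lia. Qed.

Lemma sumn_const : forall c B, sumn (fun _ => c) B = B * c.
Proof. intros c B; induction B; simpl; lia. Qed.

Lemma sumn_swap : forall (F : nat -> nat -> nat) N B,
  sumn (fun j => sumn (F j) N) B = sumn (fun m => sumn (fun j => F j m) B) N.
Proof. intros F N B; induction B; simpl.
  - induction N; simpl; lia.
  - rewrite IHB. rewrite <- sumn_add. apply sumn_ext. intros; simpl; lia. Qed.

Lemma sumn_tail : forall G k M, (forall j, G j <= 1) ->
  (forall j, k <= j -> j < M -> G j = 0) -> sumn G M <= k.
Proof. intros G k M H1 H2; induction M; simpl; [lia|].
  destruct (le_lt_dec k M).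
  - rewrite H2 by lia. specialize (IHM ltac:(intros; apply H2; lia)). lia.
  - pose proof (sumn_le1 G M H1). specialize (H1 M). lia. Qed.

Lemma indb_le1 : forall b, indb b <= 1. Proof. destruct b; simpl; lia. Qed.

Lemma window : forall (F : nat -> bool) a b, 1 <= a ->
  (forall i j, a <= j <= b -> F i = true -> F (i + j) = false) ->
  forall M i, M <= S b -> sumn (fun j => indb (F (i + j))) M <= a.
Proof.
  intros F a b Ha Hf M. induction M; intros i HM; [simpl; lia|].
  rewrite sumn_front. rewrite Nat.add_0_r.
  destruct (F i) eqn:Fi; simpl.
  - assert (sumn (fun j => indb (F (i + S j))) M <= a - 1); [|lia].
    apply sumn_tail. intros; apply indb_le1.
    intros j Hj1 Hj2. rewrite (Hf i (S j)); auto. lia.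
  - replace (sumn (fun j => indb (F (i + S j))) M) with (sumn (fun j => indb (F (S i + j))) M).
    + apply IHM; lia.
    + apply sumn_ext; intros; f_equal; f_equal; lia.
Qed.

Lemma dc : forall (Q : nat -> bool) h a b, 1 <= a ->
  (forall n j, a <= j <= b -> Q n = true -> Q (n + j * h) = false) ->
  forall N, S b * sumn (fun n => indb (Q n)) N <= N * a + S b * (b * h).
Proof.
  intros Q h a b Ha HQ N.
  rewrite <- (sumn_const (sumn (fun n => indb (Q n)) N) (S b)).
  apply Nat.le_trans with
    (sumn (fun j => j * h + sumn (fun m => indb (Q (m + j * h))) N) (S b)).
  - apply sumn_le. intros j Hj.
    apply Nat.le_trans with (sumn (fun n => indb (Q n)) (j * h + N)).
    + replace (j * h + N) with (N + j * h) by lia. rewrite sumn_split.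
      lia.
    + rewrite sumn_split.
      pose proof (sumn_le1 (fun n => indb (Q n)) (j * h) (fun i => indb_le1 _)).
      assert (sumn (fun m => indb (Q (j * h + m))) N = sumn (fun m => indb (Q (m + j * h))) N)
        by (apply sumn_ext; intros; do 2 f_equal; lia).
      lia.
  - rewrite sumn_add.
    assert (H1 : sumn (fun j => j * h) (S b) <= S b * (b * h)).
    { rewrite <- (sumn_const (b * h) (S b)). apply sumn_le. intros; nia. }
    assert (H2 : sumn (fun j => sumn (fun m => indb (Q (m + j * h))) N) (S b) <= N * a).
    { rewrite (sumn_swap (fun j m => indb (Q (m + j * h)))).
      rewrite <- (sumn_const a N). apply sumn_le. intros m _.
      pose proof (window (fun j => Q (m + j * h)) a b Ha) as W.
      assert (Hf : forall i j, a <= j <= b -> Q (m + i * h) = true -> Q (m + (i + j) * h) = false).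
      { intros i j Hj Hi. replace (m + (i + j) * h) with ((m + i * h) + j * h) by lia. auto. }
      specialize (W Hf (S b) 0 (le_n _)). simpl in W. exact W. }
    lia.
Qed.

Lemma sumn_below : forall n1 N, sumn (fun n => indb (Nat.ltb n n1)) N <= n1.
Proof. intros n1 N. apply sumn_tail. intros; apply indb_le1.
  intros j Hj _. destruct (Nat.ltb_spec j n1); simpl; lia. Qed.
Open Scope R_scope.

Definition P (beta c eta : R) (n : nat) : Prop :=
  exists k : Z, INR n * beta + c < IZR k < INR n * beta + c + eta.

Lemma int_between : forall z : Z, -1 < IZR z < 1 -> z = 0%Z.
Proof. intros z [H1 H2]. apply lt_IZR in H1. apply lt_IZR in H2. lia. Qed.

Lemma case1_excl : forall beta c eta h m j n, 0 < eta ->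
  eta <= INR j * Rabs (INR h * beta - IZR m) <= 1 - eta ->
  P beta c eta n -> P beta c eta (n + j * h) -> False.
Proof.
  intros beta c eta h m j n Heta Hj [k Hk] [k' Hk'].
  set (s := INR h * beta - IZR m) in *.
  rewrite plus_INR, mult_INR in Hk'.
  assert (E : (INR n + INR j * INR h) * beta = INR n * beta + INR j * IZR m + INR j * s)
    by (unfold s; ring).
  rewrite E in Hk'.
  set (z := (k' - k - Z.of_nat j * m)%Z).
  assert (Ez : IZR z = IZR k' - IZR k - INR j * IZR m).
  { unfold z. rewrite minus_IZR, minus_IZR, mult_IZR, <- INR_IZR_INZ. ring. }
  assert (Hjp : 0 <= INR j) by apply pos_INR.
  assert (HT : eta <= Rabs (INR j * s) <= 1 - eta).
  { rewrite Rabs_mult, (Rabs_right (INR j)) by lra. exact Hj. }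
  set (T := INR j * s) in *.
  assert (Hz : z = 0%Z).
  { apply int_between. destruct (Rcase_abs T) as [HTn|HTp].
    - rewrite Rabs_left in HT by lra. lra.
    - rewrite Rabs_right in HT by lra. lra. }
  rewrite Hz in Ez. simpl in Ez.
  destruct (Rcase_abs T) as [HTn|HTp].
  - rewrite Rabs_left in HT by lra. lra.
  - rewrite Rabs_right in HT by lra. lra.
Qed.

Lemma case2 : forall beta c eta, 0 < eta -> eta <= 1 ->
  ~ (exists h m, (1 <= h)%nat /\ 0 < Rabs (INR h * beta - IZR m) < eta) ->
  exists eta', 0 < eta' /\ forall n, ~ P beta c eta' n.
Proof.
  intros beta c eta Heta Heta1 Hno.
  destruct (classic (exists n0, P beta c eta n0)) as [[n0 [k0 Hk0]]|Hn].
  2: { exists eta; split; auto. intros n Pn; apply Hn; eauto. }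
  exists (IZR k0 - (INR n0 * beta + c)). split; [lra|].
  intros n [k Hk].
  destruct (lt_eq_lt_dec n n0) as [[Hlt|Heq]|Hgt].
  - apply Hno. exists (n0 - n)%nat, (k0 - k)%Z. split; [lia|].
    rewrite minus_INR by lia. rewrite minus_IZR.
    replace ((INR n0 - INR n) * beta - (IZR k0 - IZR k))
      with ((IZR k - (INR n * beta + c)) - (IZR k0 - (INR n0 * beta + c))) by ring.
    rewrite Rabs_left by lra. lra.
  - subst n. assert (z : (k0 - k = 0)%Z).
    { apply int_between. rewrite minus_IZR. lra. }
    assert (IZR k0 = IZR k) by (f_equal; lia). lra.
  - apply Hno. exists (n - n0)%nat, (k - k0)%Z. split; [lia|].
    rewrite minus_INR by lia. rewrite minus_IZR.
    replace ((INR n - INR n0) * beta - (IZR k - IZR k0))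
      with ((IZR k0 - (INR n0 * beta + c)) - (IZR k - (INR n * beta + c))) by ring.
    rewrite Rabs_right by lra. lra.
Qed.


Lemma split_n1 : forall (Q : nat -> bool) n1 N,
  (sumn (fun n => indb (Q n)) N <= n1 + sumn (fun n => indb (andb (Q n) (Nat.leb n1 n))) N)%nat.
Proof.
  intros Q n1 N. pose proof (sumn_below n1 N).
  assert (sumn (fun n => indb (Q n)) N <=
          sumn (fun n => indb (andb (Q n) (Nat.leb n1 n)) + indb (Nat.ltb n n1)) N)%nat.
  { apply sumn_le. intros i _. destruct (Q i); simpl; [|lia].
    destruct (Nat.leb_spec n1 i); destruct (Nat.ltb_spec i n1); simpl; lia. }
  rewrite sumn_add in H0. lia.
Qed.

Lemma up_nat : forall x, 0 < x -> INR (Z.to_nat (up x)) = IZR (up x).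
Proof. intros x Hx. destruct (archimed x) as [H1 H2].
  assert (0 < up x)%Z by (apply lt_IZR; simpl; lra).
  rewrite INR_IZR_INZ, Z2Nat.id by lia. reflexivity. Qed.

Lemma key : forall beta c eps, 0 < eps <= 1 ->
  exists eta, 0 < eta /\ exists C : nat, forall (Q : nat -> bool) n1,
    (forall n, (n1 <= n)%nat -> Q n = true -> P beta c eta n) ->
    forall N, INR (sumn (fun n => indb (Q n)) N) <= eps / 2 * INR N + INR C + INR n1.
Proof.
  intros beta c eps Heps.
  set (eta0 := eps / 8).
  assert (Heta0 : 0 < eta0 <= 1/8) by (unfold eta0; lra).
  destruct (classic (exists h m, (1 <= h)%nat /\ 0 < Rabs (INR h * beta - IZR m) < eta0))
    as [[h [m [Hh Hr]]]|Hno].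
  2: { destruct (case2 beta c eta0 ltac:(lra) ltac:(lra) Hno) as [eta [Heta HP]].
       exists eta; split; auto. exists 0%nat. intros Q n1 HQ N.
       assert (Hs : (sumn (fun n => indb (Q n)) N <= n1)%nat).
       { apply Nat.le_trans with (sumn (fun n => indb (Nat.ltb n n1)) N); [|apply sumn_below].
         apply sumn_le. intros i _. destruct (Nat.ltb_spec i n1); simpl.
         - apply indb_le1.
         - destruct (Q i) eqn:Qi; simpl; [|lia]. exfalso. apply (HP i). apply HQ; auto. }
       apply le_INR in Hs. simpl. pose proof (pos_INR N). nra. }
  exists eta0. split; [lra|].
  set (r := Rabs (INR h * beta - IZR m)) in *.
  set (a := Z.to_nat (up (eta0 / r))).
  set (y := (1 - eta0) / r).
  set (b := Z.to_nat (up y - 1)).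
  assert (Hy : 0 < y) by (unfold y; apply Rdiv_lt_0_compat; lra).
  assert (Ha : INR a = IZR (up (eta0 / r))) by (apply up_nat; apply Rdiv_lt_0_compat; lra).
  destruct (archimed (eta0 / r)) as [Ha1 Ha2].
  destruct (archimed y) as [Hb1 Hb2].
  assert (Hb : INR b = IZR (up y) - 1).
  { assert (0 < up y)%Z by (apply lt_IZR; simpl; lra).
    unfold b. rewrite INR_IZR_INZ, Z2Nat.id by lia. rewrite minus_IZR. reflexivity. }
  assert (Har : eta0 < INR a * r).
  { rewrite Ha. apply (Rmult_lt_compat_r r) in Ha1; [|lra].
    replace (eta0 / r * r) with eta0 in Ha1 by (field; lra). lra. }
  assert (Har2 : INR a * r <= eta0 + r).
  { rewrite Ha. assert (IZR (up (eta0 / r)) <= eta0 / r + 1) by lra.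
    apply (Rmult_le_compat_r r) in H; [|lra].
    replace ((eta0 / r + 1) * r) with (eta0 + r) in H by (field; lra). lra. }
  assert (Hbr : INR b * r <= 1 - eta0).
  { rewrite Hb. assert (IZR (up y) - 1 <= y) by lra.
    apply (Rmult_le_compat_r r) in H; [|lra].
    replace (y * r) with (1 - eta0) in H by (unfold y; field; lra). lra. }
  assert (Hbr2 : 1 - eta0 < INR (S b) * r).
  { rewrite S_INR, Hb. apply (Rmult_lt_compat_r r) in Hb1; [|lra].
    replace (y * r) with (1 - eta0) in Hb1 by (unfold y; field; lra). lra. }
  assert (Ha1n : (1 <= a)%nat).
  { assert (0 < INR a) by (apply (Rmult_lt_reg_r r); lra). change 0 with (INR 0) in H. apply INR_lt in H. lia. }
  assert (Hab : INR a <= eps / 2 * INR (S b)).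
  { apply (Rmult_le_reg_r r); [lra|]. unfold eta0 in *. nra. }
  exists (b * h)%nat. intros Q n1 HQ N.
  set (Q' := fun n => andb (Q n) (Nat.leb n1 n)).
  assert (HQ' : forall n j, (a <= j <= b)%nat -> Q' n = true -> Q' (n + j * h)%nat = false).
  { intros n j Hj Hn. destruct (Q' (n + j * h)%nat) eqn:Hn2; auto. exfalso.
    unfold Q' in Hn, Hn2. apply andb_prop in Hn, Hn2. destruct Hn as [Hn Hn'], Hn2 as [Hn2 Hn2'].
    apply Nat.leb_le in Hn', Hn2'.
    apply (case1_excl beta c eta0 h m j n); try lra.
    - split.
      + apply Rle_trans with (INR a * r); [lra|]. apply Rmult_le_compat_r; [unfold r; apply Rabs_pos|].
        apply le_INR; lia.
      + apply Rle_trans with (INR b * r); [|lra]. apply Rmult_le_compat_r; [unfold r; apply Rabs_pos|].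
        apply le_INR; lia.
    - apply HQ; auto.
    - apply HQ; auto. }
  pose proof (dc Q' h a b Ha1n HQ' N) as Hdc.
  pose proof (split_n1 Q n1 N) as Hsp. fold Q' in Hsp.
  apply le_INR in Hdc, Hsp.
  rewrite mult_INR, plus_INR, !mult_INR in Hdc. rewrite plus_INR in Hsp.
  rewrite mult_INR.
  set (X := INR (sumn (fun n => indb (Q' n)) N)) in *.
  assert (HX : X <= eps / 2 * INR N + INR b * INR h).
  { apply (Rmult_le_reg_l (INR (S b))). { rewrite S_INR; pose proof (pos_INR b); lra. }
    pose proof (pos_INR N). nra. }
  unfold X, Q' in HX. lra.
Qed.

Lemma floor_mono : forall x y, x <= y -> (floorR x <= floorR y)%Z.
Proof. intros x y H. unfold floorR.
  destruct (base_Int_part x), (base_Int_part y).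
  assert (IZR (Int_part x) < IZR (Int_part y) + 1) by lra.
  rewrite <- plus_IZR in H4. apply lt_IZR in H4. lia. Qed.

Lemma anal : forall theta, 1 < theta -> forall eta, 0 < eta ->
  exists n1 : nat, forall n, (n1 <= n)%nat -> Mprime theta (S n) <> Mapprox theta (S n) ->
  P (1 / ln theta) (1 / ln theta - 1 / 2) eta n.
Proof.
  intros theta Ht eta Heta.
  assert (HL : 0 < ln theta) by (rewrite <- ln_1; apply ln_increasing; lra).
  set (L := ln theta) in *.
  exists (Z.to_nat (up (L / (4 * eta)))). intros n Hn Hne.
  assert (Hpos : 0 < L / (4 * eta)) by (apply Rdiv_lt_0_compat; lra).
  pose proof (up_nat _ Hpos) as Hu. destruct (archimed (L / (4 * eta))) as [Hu1 _].
  apply le_INR in Hn. rewrite Hu in Hn.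
  set (N' := INR (S n)).
  assert (HN : L / (4 * eta) < N') by (unfold N'; rewrite S_INR; lra).
  assert (HN0 : 0 < N') by lra.
  set (x := 1 / N' * L).
  assert (Hx : 0 < x) by (unfold x; apply Rmult_lt_0_compat; [apply Rdiv_lt_0_compat|]; lra).
  assert (Hx4 : x / 4 < eta).
  { unfold x. apply (Rmult_lt_compat_r (4 * eta)) in HN; [|lra].
    replace (L / (4 * eta) * (4 * eta)) with L in HN by (field; lra).
    apply (Rmult_lt_reg_r (4 * N')); [lra|].
    replace (1 / N' * L / 4 * (4 * N')) with L by (field; lra). lra. }
  destruct (exp_bounds x Hx) as [B1 B2].
  assert (Hix : 1 / x = N' / L) by (unfold x; field; lra).
  rewrite Hix in B1, B2.
  unfold Mprime, Mapprox, Rpower in Hne. fold L in Hne. fold N' in Hne. fold x in Hne.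
  set (f := 1 / (exp x - 1)) in *.
  set (g := N' / L - 1 / 2) in *.
  pose proof (floor_mono _ _ B1) as Hm.
  exists (floorR f).
  destruct (base_Int_part f) as [F1 F2]. destruct (base_Int_part g) as [G1 G2].
  unfold floorR in *.
  assert (Hlt : (Int_part g + 1 <= Int_part f)%Z) by lia.
  apply IZR_le in Hlt. rewrite plus_IZR in Hlt.
  assert (Hg : INR n * (1 / L) + (1 / L - 1 / 2) = g).
  { unfold g, N'. rewrite S_INR. field. lra. }
  rewrite Hg. lra.
Qed.

Lemma countA_sumn : forall theta N, countA theta N =
  sumn (fun n => indb (if Z.eq_dec (Mprime theta (S n)) (Mapprox theta (S n)) then false else true)) N.
Proof. intros theta N; induction N; simpl; auto.
  rewrite IHN. destruct (Z.eq_dec _ _); reflexivity. Qed.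

Theorem theorem3 (theta : R) (Htheta : 1 < theta) :
  Un_cv (fun N : nat => INR (countA theta N) / INR N) 0.
Proof.
  intros eps Heps.
  set (e := Rmin eps 1).
  assert (He : 0 < e <= 1) by (unfold e; unfold Rmin; destruct (Rle_dec eps 1); lra).
  assert (Hee : e <= eps) by apply Rmin_l.
  destruct (key (1 / ln theta) (1 / ln theta - 1 / 2) e He) as [eta [Heta [C HC]]].
  destruct (anal theta Htheta eta Heta) as [n1 Hn1].
  set (Q := fun n => if Z.eq_dec (Mprime theta (S n)) (Mapprox theta (S n)) then false else true).
  assert (HQ : forall n, (n1 <= n)%nat -> Q n = true -> P (1 / ln theta) (1 / ln theta - 1 / 2) eta n).
  { intros n Hn HQn. apply Hn1; auto. unfold Q in HQn. destruct (Z.eq_dec _ _); congruence. }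
  specialize (HC Q n1 HQ).
  set (K := 2 * (INR C + INR n1 + 1) / e).
  assert (HK : 0 < K).
  { unfold K. apply Rdiv_lt_0_compat; [pose proof (pos_INR C); pose proof (pos_INR n1)|]; lra. }
  exists (Z.to_nat (up K)). intros N HN.
  pose proof (up_nat _ HK) as Hu. destruct (archimed K) as [Hu1 _].
  apply le_INR in HN. rewrite Hu in HN. unfold R_dist.
  specialize (HC N). unfold Q in HC. rewrite <- countA_sumn in HC.
  assert (HNK : K < INR N) by lra.
  assert (HN0 : 0 < INR N) by lra.
  assert (Hc : INR C + INR n1 < e / 2 * INR N).
  { unfold K in HNK. apply (Rmult_lt_compat_r e) in HNK; [|lra].
    replace (2 * (INR C + INR n1 + 1) / e * e) with (2 * (INR C + INR n1 + 1)) in HNK by (field; lra).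
    lra. }
  pose proof (pos_INR (countA theta N)).
  rewrite Rminus_0_r, Rabs_right.
  2: { apply Rle_ge. unfold Rdiv; apply Rmult_le_pos; [lra|]; left; apply Rinv_0_lt_compat; lra. }
  apply (Rmult_lt_reg_r (INR N)); auto.
  replace (INR (countA theta N) / INR N * INR N) with (INR (countA theta N)) by (field; lra).
  nra.
Qed.
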